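(* Let $t=(t_1:t_2:t_3)\in C^0(k)$ and let $U_3(\mathbb F_p)=\{A\in\mathrm{GL}_3(\mathbb F_{p^2}):A^TA^{(p)}=\mathbb I_3\}$. Via the map $A\mapsto\alpha_A$ (where $A\cdot t=\alpha_At$): (1) if $t\notin C(\mathbb F_{p^6})$, then $\mathrm{End}(t)\cap U_3(\mathbb F_p)\simeq\{\alpha\in\mathbb F_{p^2}:\alpha^{p+1}=1\}$; (2) if $t\in C(\mathbb F_{p^6})$, then $\mathrm{End}(t)\cap U_3(\mathbb F_p)\simeq\{\alpha\in\mathbb F_{p^6}:\alpha^{p^3+1}=1\}$.
   Context: $k$ is algebraically closed of characteristic $p$, $C\subset\mathbb P^2$ is the Fermat curve $X_1^{p+1}+X_2^{p+1}+X_3^{p+1}=0$, $C^0=C\setminus C(\mathbb F_{p^2})$, $A^{(p)}$ is obtained by raising entries to the $p$-th power, and $\mathrm{End}(t)=\{A\in\mathrm{Mat}_3(\mathbb F_{p^2}):A\cdot t\in k\cdot t\}$ for $t$ viewed as a column vector. *)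

(* Defs.v *)
From HB Require Import structures.
From mathcomp Require Import all_boot all_order all_algebra.
Set Implicit Arguments. Unset Strict Implicit. Unset Printing Implicit Defensive.
Import GRing.Theory.
Local Open Scope ring_scope.

Definition inFq (k : fieldType) (p n : nat) (x : k) : Prop := x ^+ (p ^ n) = x.

(* t (a nonzero column vector, i.e. a representative of a point of P^2(k))
   lies on the Fermat curve X1^{p+1}+X2^{p+1}+X3^{p+1}=0 *)
Definition onFermat (k : fieldType) (p : nat) (t : 'cV[k]_3) : Prop :=
  t != 0 /\ \sum_(i < 3) (t i 0) ^+ p.+1 = 0.

Definition ratPt (k : fieldType) (p n : nat) (t : 'cV[k]_3) : Prop :=
  exists s : 'cV[k]_3, [/\ s != 0, forall i, inFq p n (s i 0) & exists c : k, t = c *: s].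

Definition inEnd (k : fieldType) (p : nat) (t : 'cV[k]_3) (A : 'M[k]_3) : Prop :=
  (forall i j, inFq p 2 (A i j)) /\ exists a : k, A *m t = a *: t.

Definition inU3 (k : fieldType) (p : nat) (A : 'M[k]_3) : Prop :=
  [/\ forall i j, inFq p 2 (A i j), A \in unitmx &
      A^T *m map_mx (fun x => x ^+ p) A = 1%:M].

(* "End(t) ∩ U_3(F_p) is in bijection with S via A |-> alpha_A, where A t = alpha_A t" *)
Definition alpha_bij (k : fieldType) (p : nat) (t : 'cV[k]_3) (S : k -> Prop) : Prop :=
  [/\ (forall A a, inEnd p t A -> inU3 p A -> A *m t = a *: t -> S a),
      (forall A B a, inEnd p t A -> inU3 p A -> inEnd p t B -> inU3 p B ->
          A *m t = a *: t -> B *m t = a *: t -> A = B) &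
      (forall a, S a -> exists A, [/\ inEnd p t A, inU3 p A & A *m t = a *: t])].

(* Main.v *)
Require Import Defs.
From HB Require Import structures.
From mathcomp Require Import all_boot all_order all_algebra.
From mathcomp Require Import ring.
Import GRing.Theory.
Local Open Scope ring_scope.
Set Implicit Arguments. Unset Strict Implicit.

Lemma pnat_pow (k : fieldType) (p n : nat) : p \in [pchar k] -> ([pchar k]).-nat (p ^ n)%N.
Proof.
move=> hp; have pp := pcharf_prime hp.
rewrite (eq_pnat _ (pcharf_eq hp)).
by rewrite pnatX pnat_id.
Qed.

Lemma frD (k : fieldType) (p n : nat) (x y : k) : p \in [pchar k] ->
  (x + y) ^+ (p ^ n) = x ^+ (p ^ n) + y ^+ (p ^ n).
Proof. by move=> hp; rewrite exprDn_pchar // pnat_pow. Qed.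

Lemma frN (k : fieldType) (p n : nat) (x : k) : p \in [pchar k] ->
  (- x) ^+ (p ^ n) = - x ^+ (p ^ n).
Proof. by move=> hp; rewrite exprNn_pchar // pnat_pow. Qed.

Lemma fr_sum (k : fieldType) (p n : nat) (F : 'I_3 -> k) : p \in [pchar k] ->
  (\sum_(i < 3) F i) ^+ (p ^ n) = \sum_(i < 3) F i ^+ (p ^ n).
Proof.
move=> hp; apply: (big_morph (fun x => x ^+ (p ^ n))).
- by move=> x y; rewrite frD.
- by rewrite expr0n eqn0Ngt expn_gt0 (prime_gt0 (pcharf_prime hp)).
Qed.

Lemma frfr (k : fieldType) (p a b : nat) (x : k) :
  (x ^+ (p ^ a)) ^+ (p ^ b) = x ^+ (p ^ (a + b)).
Proof. by rewrite -exprM -expnD. Qed.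

Lemma fr_inj (k : fieldType) (p n : nat) (x y : k) : p \in [pchar k] ->
  x ^+ (p ^ n) = y ^+ (p ^ n) -> x = y.
Proof.
move=> hp e; apply/eqP; rewrite -subr_eq0.
have : (x - y) ^+ (p ^ n) == 0 by rewrite frD // frN // e subrr.
by rewrite expf_eq0 => /andP[].
Qed.

Lemma sum3 (k : zmodType) (F : 'I_3 -> k) :
  \sum_(i < 3) F i = F 0 + F 1 + F 2.
Proof. rewrite !big_ord_recr big_ord0 /= add0r; congr (_ + _ + _); exact/f_equal/val_inj. Qed.
Lemma iso_core (k : fieldType) (x0 x1 x2 y0 y1 y2 X0 X1 X2 Y0 Y1 Y2 : k) :
  x0*X0 + x1*X1 + x2*X2 = 0 -> x0*Y0 + x1*Y1 + x2*Y2 = 0 ->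
  y0*X0 + y1*X1 + y2*X2 = 0 -> y0*Y0 + y1*Y1 + y2*Y2 = 0 ->
  [/\ (X1*Y2 - X2*Y1)^+2 * (x1*y2 - x2*y1) = 0,
      (X2*Y0 - X0*Y2)^+2 * (x2*y0 - x0*y2) = 0 &
      (X0*Y1 - X1*Y0)^+2 * (x0*y1 - x1*y0) = 0].
Proof.
move=> hxx hxy hyx hyy.
set d0 := X1*Y2 - X2*Y1; set d1 := X2*Y0 - X0*Y2; set d2 := X0*Y1 - X1*Y0.
have ex0 : x1*d2 = x2*d1.
  apply/eqP; rewrite -subr_eq0; apply/eqP.
  have -> : x1*d2 - x2*d1 = X0*(x0*Y0 + x1*Y1 + x2*Y2) - Y0*(x0*X0 + x1*X1 + x2*X2) by rewrite /d1 /d2; ring.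
  by rewrite hxx hxy; ring.
have ex1 : x2*d0 = x0*d2.
  apply/eqP; rewrite -subr_eq0; apply/eqP.
  have -> : x2*d0 - x0*d2 = X1*(x0*Y0 + x1*Y1 + x2*Y2) - Y1*(x0*X0 + x1*X1 + x2*X2) by rewrite /d0 /d2; ring.
  by rewrite hxx hxy; ring.
have ex2 : x0*d1 = x1*d0.
  apply/eqP; rewrite -subr_eq0; apply/eqP.
  have -> : x0*d1 - x1*d0 = X2*(x0*Y0 + x1*Y1 + x2*Y2) - Y2*(x0*X0 + x1*X1 + x2*X2) by rewrite /d0 /d1; ring.
  by rewrite hxx hxy; ring.
have ey0 : y1*d2 = y2*d1.
  apply/eqP; rewrite -subr_eq0; apply/eqP.
  have -> : y1*d2 - y2*d1 = X0*(y0*Y0 + y1*Y1 + y2*Y2) - Y0*(y0*X0 + y1*X1 + y2*X2) by rewrite /d1 /d2; ring.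
  by rewrite hyx hyy; ring.
have ey1 : y2*d0 = y0*d2.
  apply/eqP; rewrite -subr_eq0; apply/eqP.
  have -> : y2*d0 - y0*d2 = X1*(y0*Y0 + y1*Y1 + y2*Y2) - Y1*(y0*X0 + y1*X1 + y2*X2) by rewrite /d0 /d2; ring.
  by rewrite hyx hyy; ring.
have ey2 : y0*d1 = y1*d0.
  apply/eqP; rewrite -subr_eq0; apply/eqP.
  have -> : y0*d1 - y1*d0 = X2*(y0*Y0 + y1*Y1 + y2*Y2) - Y2*(y0*X0 + y1*X1 + y2*X2) by rewrite /d0 /d1; ring.
  by rewrite hyx hyy; ring.
split.
- have -> : d0^+2 * (x1*y2 - x2*y1) = (x1*d0)*(y2*d0) - (x2*d0)*(y1*d0) by ring.
  by rewrite -ex2 ex1 ey1 -ey2; ring.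
- have -> : d1^+2 * (x2*y0 - x0*y2) = (x2*d1)*(y0*d1) - (x0*d1)*(y2*d1) by ring.
  by rewrite -ex0 ex2 ey2 -ey0; ring.
- have -> : d2^+2 * (x0*y1 - x1*y0) = (x0*d2)*(y1*d2) - (x1*d2)*(y0*d2) by ring.
  by rewrite -ex1 ex0 ey0 -ey1; ring.
Qed.

Lemma ord3P (P : 'I_3 -> Prop) : P 0 -> P 1 -> P 2 -> forall i, P i.
Proof.
move=> h0 h1 h2 [[|[|[|m]]] H].
- by have -> : Ordinal H = 0 by apply/val_inj.
- by have -> : Ordinal H = 1 by apply/val_inj.
- by have -> : Ordinal H = 2 by apply/val_inj.
- by [].
Qed.

Lemma frM_sum (k : fieldType) (p m : nat) (F G : 'I_3 -> k) : p \in [pchar k] ->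
  (\sum_(i < 3) F i * G i) ^+ (p ^ m) = \sum_(i < 3) F i ^+ (p ^ m) * G i ^+ (p ^ m).
Proof. by move=> hp; rewrite fr_sum //; apply: eq_bigr => i _; rewrite exprMn. Qed.

Lemma frB1 (k : fieldType) (p : nat) (x y : k) : p \in [pchar k] ->
  (x - y) ^+ p = x ^+ p - y ^+ p.
Proof. by move=> hp; have := @frD _ _ 1 x (- y) hp; rewrite expn1 => ->; rewrite -(expn1 p) frN // expn1. Qed.

Lemma cross_zero (k : fieldType) (p : nat) (x y : 'I_3 -> k) : p \in [pchar k] ->
  \sum_(i < 3) x i * x i ^+ p = 0 -> \sum_(i < 3) x i * y i ^+ p = 0 ->
  \sum_(i < 3) y i * x i ^+ p = 0 -> \sum_(i < 3) y i * y i ^+ p = 0 ->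
  forall i j, x i * y j = x j * y i.
Proof.
move=> hp; rewrite !sum3 => h1 h2 h3 h4.
have [c0 c1 c2] := iso_core h1 h2 h3 h4.
have pp := prime_gt0 (pcharf_prime hp).
have key : forall c d : k, c ^+ p = d -> d ^+ 2 * c = 0 -> c = 0.
  move=> c d <- /eqP; rewrite mulf_eq0 expf_eq0 /= expf_eq0 pp /=.
  by case/orP => /eqP.
have z0 : x 1 * y 2 - x 2 * y 1 = 0.
  by apply: (key _ _ _ c0); rewrite frB1 // !exprMn.
have z1 : x 2 * y 0 - x 0 * y 2 = 0.
  by apply: (key _ _ _ c1); rewrite frB1 // !exprMn.
have z2 : x 0 * y 1 - x 1 * y 0 = 0.
  by apply: (key _ _ _ c2); rewrite frB1 // !exprMn.
move/eqP: z0; rewrite subr_eq0 => /eqP z0.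
move/eqP: z1; rewrite subr_eq0 => /eqP z1.
move/eqP: z2; rewrite subr_eq0 => /eqP z2.
apply: ord3P; apply: ord3P => //.
Qed.

Lemma col_nz (k : fieldType) (t : 'cV[k]_3) : t != 0 -> exists i, t i 0 != 0.
Proof.
move=> tnz; apply/existsP; apply: contraR tnz; rewrite negb_exists => /forallP h.
apply/eqP/matrixP => i j; rewrite (ord1 j) mxE.
by have := h i; rewrite negbK => /eqP.
Qed.

Lemma rat_of_prop (k : fieldType) (p n : nat) (t : 'cV[k]_3) (l : k) :
  t != 0 -> (forall i, t i 0 ^+ (p ^ n) = l * t i 0) -> ratPt p n t.
Proof.
move=> tnz h; have [i ti] := col_nz tnz.
exists ((t i 0)^-1 *: t); split.
- by rewrite scaler_eq0 negb_or invr_eq0 ti.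
- have l0 : l != 0.
    apply/eqP => l0; move: (h i); rewrite l0 mul0r => /eqP; rewrite expf_eq0 => /andP[_].
    by rewrite (negbTE ti).
  move=> j; rewrite /inFq mxE exprMn h exprVn h invfM; rewrite mulrACA mulVf ?mul1r //.
- by exists (t i 0); rewrite scalerA divff // scale1r.
Qed.

Lemma prop_of_cross (k : fieldType) (x y : 'I_3 -> k) (i : 'I_3) :
  x i != 0 -> (forall i j, x i * y j = x j * y i) ->
  exists l, forall j, y j = l * x j.
Proof.
move=> xi h; exists (y i / x i) => j.
by rewrite mulrAC [y i * x j]mulrC -h mulrC mulKf.
Qed.

Lemma sum_shift (k : fieldType) (p m j : nat) (x : 'I_3 -> k) : p \in [pchar k] ->
  \sum_(i < 3) x i ^+ (p ^ m) * x i ^+ (p ^ (m + j)) =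
  (\sum_(i < 3) x i * x i ^+ (p ^ j)) ^+ (p ^ m).
Proof. by move=> hp; rewrite frM_sum //; apply: eq_bigr => i _; rewrite frfr addnC. Qed.

Lemma ferm_fr (k : fieldType) (p m : nat) (x : 'I_3 -> k) : p \in [pchar k] ->
  \sum_(i < 3) x i ^+ p.+1 = 0 ->
  \sum_(i < 3) x i ^+ (p ^ m) * x i ^+ (p ^ (m + 1)) = 0.
Proof.
move=> hp h; rewrite sum_shift //.
have -> : \sum_(i < 3) x i * x i ^+ (p ^ 1) = 0.
  by rewrite -[RHS]h; apply: eq_bigr => i _; rewrite expn1 exprS.
by rewrite expr0n eqn0Ngt expn_gt0 (prime_gt0 (pcharf_prime hp)).
Qed.

Lemma g_nz (k : fieldType) (p : nat) (t : 'cV[k]_3) : p \in [pchar k] ->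
  onFermat p t -> ~ ratPt p 2 t ->
  \sum_(i < 3) t i 0 * t i 0 ^+ (p ^ 3) != 0.
Proof.
move=> hp [tnz hf] nr; apply/negP => /eqP g0; apply: nr.
have [i ti] := col_nz tnz.
have F0 := ferm_fr 0 hp hf; have F1 := ferm_fr 1 hp hf; have F2 := ferm_fr 2 hp hf.
have hc : forall i j, t i 0 * (t j 0 ^+ (p ^ 2)) = t j 0 * (t i 0 ^+ (p ^ 2)).
  apply: cross_zero hp _ _ _ _.
  - by rewrite -[RHS]F0; apply: eq_bigr => l _; rewrite expn0 expr1 expn1.
  - by rewrite -[RHS]g0; apply: eq_bigr => l _; rewrite -exprM -expnSr.
  - by rewrite -[RHS]F1; apply: eq_bigr => l _; rewrite mulrC expn1.
  - by rewrite -[RHS]F2; apply: eq_bigr => l _; rewrite -exprM -expnSr.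
have [l hl] := prop_of_cross ti hc.
by apply: (rat_of_prop (l := l)) => // j; rewrite hl.
Qed.

Definition Tm (k : fieldType) (p : nat) (t : 'cV[k]_3) : 'M[k]_3 :=
  \matrix_(i, j) t i 0 ^+ (p ^ (2 * j)).

Lemma G_entry (k : fieldType) (p : nat) (t : 'cV[k]_3) i j :
  ((Tm p t)^T *m map_mx (fun x => x ^+ p) (Tm p t)) i j =
  \sum_(l < 3) t l 0 ^+ (p ^ (2 * i)) * t l 0 ^+ (p ^ (2 * j).+1).
Proof. by rewrite mxE; apply: eq_bigr => l _; rewrite !mxE -exprM -expnSr. Qed.

Lemma G_unit (k : fieldType) (p : nat) (t : 'cV[k]_3) : p \in [pchar k] ->
  onFermat p t -> ~ ratPt p 2 t ->
  (Tm p t)^T *m map_mx (fun x => x ^+ p) (Tm p t) \in unitmx.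
Proof.
move=> hp ft nr; have gnz := g_nz hp ft nr; case: ft => tnz hf.
set G := _ *m _.
pose x := fun i => t i 0.
pose g := \sum_(i < 3) t i 0 * t i 0 ^+ (p ^ 3).
have Z : forall m, \sum_(l < 3) x l ^+ (p ^ m) * x l ^+ (p ^ (m + 1)) = 0.
  by move=> m; apply: ferm_fr.
have Zc : forall m, \sum_(l < 3) x l ^+ (p ^ (m + 1)) * x l ^+ (p ^ m) = 0.
  by move=> m; rewrite -[RHS](Z m); apply: eq_bigr => l _; rewrite mulrC.
have Y : forall m, \sum_(l < 3) x l ^+ (p ^ m) * x l ^+ (p ^ (m + 3)) = g ^+ (p ^ m).
  by move=> m; rewrite sum_shift.
have G00 : G 0 0 = 0 by rewrite G_entry; apply: (Z 0).
have G11 : G 1 1 = 0 by rewrite G_entry; apply: (Z 2).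
have G22 : G 2 2 = 0 by rewrite G_entry; apply: (Z 4).
have G10 : G 1 0 = 0 by rewrite G_entry; apply: (Zc 1).
have G21 : G 2 1 = 0 by rewrite G_entry; apply: (Zc 3).
have G01 : G 0 1 = g by rewrite G_entry (Y 0) expn0 expr1.
have G12 : G 1 2 = g ^+ (p ^ 2) by rewrite G_entry (Y 2).
have G20 : G 2 0 = g ^+ (p ^ 1).
  by rewrite G_entry -(Y 1); apply: eq_bigr => l _; rewrite mulrC.
set a := G 0 1; set b := G 0 2; set c := G 1 2; set d := G 2 0.
have a0 : a != 0 by rewrite /a G01.
have c0 : c != 0 by rewrite /c G12 expf_eq0 negb_and gnz orbT.
have d0 : d != 0 by rewrite /d G20 expf_eq0 negb_and gnz orbT.
pose H : 'M[k]_3 := \matrix_(i, j)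
  nth 0 (nth [::] [:: [:: 0; 0; d^-1]; [:: a^-1; - b / (a * c); 0]; [:: 0; c^-1; 0]] i) j.
suff /mulmx1_unit[] : G *m H = 1%:M by [].
have Ga : G 0 1 = a by []. have Gb : G 0 2 = b by []. 
have Gc : G 1 2 = c by []. have Gd : G 2 0 = d by [].
clearbody a b c d; clearbody G.
apply/matrixP; apply: ord3P; apply: ord3P;
  rewrite mxE sum3 /H !mxE /= ?G00 ?G11 ?G22 ?G10 ?G21 ?Ga ?Gb ?Gc ?Gd; by field; rewrite ?a0 ?c0 ?d0.
Qed.

Lemma inFq_mul (k : fieldType) (p n m : nat) (x : k) :
  x ^+ (p ^ n) = x -> x ^+ (p ^ (n * m)) = x.
Proof.
move=> h; elim: m => [|m IH]; first by rewrite muln0 expn0 expr1.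
by rewrite mulnS expnD exprM h IH.
Qed.

Lemma AT_form (k : fieldType) (p : nat) (t : 'cV[k]_3) (A : 'M[k]_3) (a : k) :
  p \in [pchar k] ->
  (forall i j, A i j ^+ (p ^ 2) = A i j) -> A *m t = a *: t ->
  A *m Tm p t = \matrix_(i, j) (a * t i 0) ^+ (p ^ (2 * j)).
Proof.
move=> hp hA e; apply/matrixP => i j; rewrite !mxE.
have := congr1 (fun M : 'cV_3 => M i 0) e; rewrite !mxE => <-.
rewrite frM_sum //; apply: eq_bigr => l _; rewrite mxE.
by rewrite [A i l ^+ _]inFq_mul ?hA.
Qed.

Lemma unit_entry (k : fieldType) (p : nat) (t : 'cV[k]_3) (A : 'M[k]_3) (a : k) i j :
  A *m Tm p t = \matrix_(i, j) (a * t i 0) ^+ (p ^ (2 * j)) ->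
  ((A *m Tm p t)^T *m map_mx (fun x => x ^+ p) (A *m Tm p t)) i j =
  a ^+ (p ^ (2 * i)) * a ^+ (p ^ (2 * j).+1) *
  ((Tm p t)^T *m map_mx (fun x => x ^+ p) (Tm p t)) i j.
Proof.
move=> e; rewrite e G_entry mxE mulr_sumr; apply: eq_bigr => l _.
rewrite !mxE -exprM -expnSr !exprMn.
by rewrite mulrACA.
Qed.

Lemma frmxM (k : fieldType) (p : nat) (A B : 'M[k]_3) : p \in [pchar k] ->
  map_mx (fun x => x ^+ p) (A *m B) =
  map_mx (fun x => x ^+ p) A *m map_mx (fun x => x ^+ p) B.
Proof. by move=> hp; exact: (map_mxM (pFrobenius_aut hp) A B). Qed.

Lemma G01_eq (k : fieldType) (p : nat) (t : 'cV[k]_3) : p \in [pchar k] ->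
  ((Tm p t)^T *m map_mx (fun x => x ^+ p) (Tm p t)) 0 1 =
  \sum_(i < 3) t i 0 * t i 0 ^+ (p ^ 3).
Proof.
move=> hp; rewrite G_entry /=.
by apply: eq_bigr => l _; rewrite expn0 expr1.
Qed.

Lemma T_units (k : fieldType) (p : nat) (t : 'cV[k]_3) : p \in [pchar k] ->
  onFermat p t -> ~ ratPt p 2 t ->
  (Tm p t) \in unitmx /\ map_mx (fun x => x ^+ p) (Tm p t) \in unitmx.
Proof.
move=> hp ft nr; have := G_unit hp ft nr.
by rewrite unitmx_mul unitmx_tr => /andP[].
Qed.

Lemma conjG (k : fieldType) (p : nat) (T M : 'M[k]_3) : p \in [pchar k] ->
  (M *m T)^T *m map_mx (fun x => x ^+ p) (M *m T) =
  T^T *m (M^T *m map_mx (fun x => x ^+ p) M) *m map_mx (fun x => x ^+ p) T.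
Proof. by move=> hp; rewrite trmx_mul frmxM // !mulmxA. Qed.

Lemma alpha_norm (k : fieldType) (p : nat) (t : 'cV[k]_3) (A : 'M[k]_3) (a : k) :
  p \in [pchar k] -> onFermat p t -> ~ ratPt p 2 t ->
  (forall i j, A i j ^+ (p ^ 2) = A i j) ->
  A^T *m map_mx (fun x => x ^+ p) A = 1%:M -> A *m t = a *: t ->
  a * a ^+ (p ^ 3) = 1.
Proof.
move=> hp ft nr hA hU e.
have AT := AT_form hp hA e.
have := unit_entry 0 1 AT; rewrite conjG // hU mulmx1 G01_eq //= expn0 expr1.
have -> : (p ^ (2 * (1 %% 3)).+1 = p ^ 3)%N by [].
move=> /eqP; rewrite eq_sym -subr_eq0 -{2}[\sum_(i < 3) _]mul1r -mulrBl mulf_eq0.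
by rewrite (negbTE (g_nz hp ft nr)) orbF subr_eq0 => /eqP.
Qed.

Lemma alpha_inj (k : fieldType) (p : nat) (t : 'cV[k]_3) (A B : 'M[k]_3) (a : k) :
  p \in [pchar k] -> onFermat p t -> ~ ratPt p 2 t ->
  (forall i j, A i j ^+ (p ^ 2) = A i j) -> (forall i j, B i j ^+ (p ^ 2) = B i j) ->
  A *m t = a *: t -> B *m t = a *: t -> A = B.
Proof.
move=> hp ft nr hA hB eA eB.
have [Tu _] := T_units hp ft nr.
by rewrite -(mulmxK Tu A) -(mulmxK Tu B) (AT_form hp hA eA) (AT_form hp hB eB).
Qed.

Lemma alpha_p6 (k : fieldType) (p : nat) (a : k) :
  a * a ^+ (p ^ 3) = 1 -> a != 0 /\ a ^+ (p ^ 6) = a.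
Proof.
move=> N; have a0 : a != 0 by apply/eqP => a0; move: N; rewrite a0 mul0r => /eqP; rewrite eq_sym oner_eq0.
split => //.
have a3 : a ^+ (p ^ 3) = a^-1 by rewrite -[LHS](mulKf a0) N mulr1.
by rewrite -(frfr p 3 3) a3 exprVn a3 invrK.
Qed.

Lemma case1_image (k : fieldType) (p : nat) (t : 'cV[k]_3) (A : 'M[k]_3) (a : k) :
  p \in [pchar k] -> onFermat p t -> ~ ratPt p 2 t -> ~ ratPt p 6 t ->
  (forall i j, A i j ^+ (p ^ 2) = A i j) ->
  A^T *m map_mx (fun x => x ^+ p) A = 1%:M -> A *m t = a *: t ->
  a ^+ (p ^ 2) = a.
Proof.
move=> hp ft nr nr6 hA hU e.
have [a0 a6] := alpha_p6 (alpha_norm hp ft nr hA hU e).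
have [Tu _] := T_units hp ft nr.
apply/eqP; apply: contraT => a2.
have a4 : a ^+ (p ^ 4) != a.
  apply: contra a2 => /eqP a4; apply/eqP; by rewrite -[RHS]a6 -(frfr p 4 2) a4.
pose u3 : 'cV[k]_3 := \col_i t i 0 ^+ (p ^ 6).
have Au3 : A *m u3 = a *: u3.
  apply/matrixP => i j; rewrite (ord1 j) !mxE.
  have := congr1 (fun M : 'cV_3 => M i 0) e; rewrite !mxE => E.
  rewrite -{1}a6 -exprMn -E frM_sum //; apply: eq_bigr => l _; rewrite mxE.
  by rewrite [A i l ^+ _](@inFq_mul _ p 2 3) ?hA.
pose d : 'rV[k]_3 := \row_j a ^+ (p ^ (2 * j)).
have AT : A *m Tm p t = Tm p t *m diag_mx d.
  rewrite (AT_form hp hA e) mul_mx_diag; apply/matrixP => i j; rewrite !mxE.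
  by rewrite exprMn mulrC.
pose c := invmx (Tm p t) *m u3.
have Tc : Tm p t *m c = u3 by rewrite /c mulKVmx.
have Dc : diag_mx d *m c = a *: c.
  apply: (can_inj (mulKmx Tu)).
  by rewrite mulmxA -AT -mulmxA Tc Au3 -scalemxAr Tc.
have cj : forall j : 'I_3, a ^+ (p ^ (2 * j)) != a -> c j 0 = 0.
  move=> j hj; have := congr1 (fun M : 'cV_3 => M j 0) Dc.
  rewrite mul_diag_mx !mxE => /eqP; rewrite -subr_eq0 -mulrBl mulf_eq0 subr_eq0 (negbTE hj) /=.
  by move/eqP.
have c1 := cj 1 a2; have c2 := cj 2 a4.
case: nr6; apply: (rat_of_prop (l := c 0 0)); first by case: ft.
move=> i; have := congr1 (fun M : 'cV_3 => M i 0) Tc; rewrite !mxE sum3 c1 c2 !mulr0 !addr0 => <-.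
by rewrite !mxE /= expn0 expr1 mulrC.
Qed.

Lemma case2_surj (k : fieldType) (p : nat) (s : 'cV[k]_3) (a : k) :
  p \in [pchar k] -> onFermat p s -> ~ ratPt p 2 s ->
  (forall i, s i 0 ^+ (p ^ 6) = s i 0) ->
  a ^+ (p ^ 6) = a -> a * a ^+ (p ^ 3) = 1 ->
  exists A : 'M[k]_3, [/\ forall i j, A i j ^+ (p ^ 2) = A i j, A \in unitmx,
     A^T *m map_mx (fun x => x ^+ p) A = 1%:M & A *m s = a *: s].
Proof.
move=> hp ft nr hs6 a6 N.
have [Tu Tpu] := T_units hp ft nr.
pose d : 'rV[k]_3 := \row_j a ^+ (p ^ (2 * j)).
pose A := Tm p s *m diag_mx d *m invmx (Tm p s).
have AT : A *m Tm p s = \matrix_(i, j) (a * s i 0) ^+ (p ^ (2 * j)).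
  rewrite /A mulmxKV // mul_mx_diag; apply/matrixP => i j; rewrite !mxE.
  by rewrite exprMn mulrC.
have As : A *m s = a *: s.
  apply/matrixP => i j; rewrite (ord1 j).
  have := congr1 (fun M : 'M_3 => M i 0) AT; rewrite !mxE /= expn0 expr1 => <-.
  by apply: eq_bigr => l _; rewrite !mxE /= expn0 expr1.
clearbody A.
have key : forall i (j' : 'I_3) n, n = (2 * j' + 2)%N ->
    \sum_(l < 3) A i l ^+ (p ^ 2) * s l 0 ^+ (p ^ n) = (a * s i 0) ^+ (p ^ n).
  move=> i j' n ->; rewrite expnD exprM.
  have := congr1 (fun M : 'M_3 => M i j') AT; rewrite !mxE => <-.
  rewrite frM_sum //; apply: eq_bigr => l _; rewrite mxE.
  by rewrite -exprM.
have sAT : map_mx (fun x => x ^+ (p ^ 2)) A *m Tm p s = A *m Tm p s.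
  rewrite AT; apply/matrixP => i; apply: ord3P; rewrite !mxE /=.
  - have := key i 2 6 erefl; rewrite exprMn a6 hs6 => <-.
    by apply: eq_bigr => l _; rewrite !mxE /= hs6.
  - by rewrite -(key i 0 2 erefl); apply: eq_bigr => l _; rewrite !mxE.
  - by rewrite -(key i 1 4 erefl); apply: eq_bigr => l _; rewrite !mxE.
have sA : map_mx (fun x => x ^+ (p ^ 2)) A = A.
  by rewrite -(mulmxK Tu (map_mx _ A)) sAT mulmxK.
have hA : forall i j, A i j ^+ (p ^ 2) = A i j.
  by move=> i j; have := congr1 (fun M : 'M_3 => M i j) sA; rewrite mxE.
case: (ft) => snz hf.
pose x := fun i => s i 0.
have Z : forall m, \sum_(l < 3) x l ^+ (p ^ m) * x l ^+ (p ^ (m + 1)) = 0.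
  by move=> m; apply: ferm_fr.
have Zc : forall m, \sum_(l < 3) x l ^+ (p ^ (m + 1)) * x l ^+ (p ^ m) = 0.
  by move=> m; rewrite -[RHS](Z m); apply: eq_bigr => l _; rewrite mulrC.
pose G := (Tm p s)^T *m map_mx (fun x => x ^+ p) (Tm p s).
have G00 : G 0 0 = 0 by rewrite G_entry; apply: (Z 0).
have G11 : G 1 1 = 0 by rewrite G_entry; apply: (Z 2).
have G22 : G 2 2 = 0 by rewrite G_entry; apply: (Z 4).
have G10 : G 1 0 = 0 by rewrite G_entry; apply: (Zc 1).
have G21 : G 2 1 = 0 by rewrite G_entry; apply: (Zc 3).
have G02 : G 0 2 = 0.
  rewrite G_entry; apply: (@fr_inj _ p 1 _ _ hp); rewrite frM_sum //.
  rewrite expr0n eqn0Ngt expn_gt0 (prime_gt0 (pcharf_prime hp)) /=.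
  rewrite -[RHS](Z 0); apply: eq_bigr => l _ /=.
  rewrite !frfr.
  have E6 : s l 0 ^+ (p ^ ((2 * ((1 %% 3 + 1 %% 3) %% 3)).+1 + 1)) = s l 0 := hs6 l.
  by rewrite E6 expn0 expr1 mulrC.
have N' : forall m n1 n2, n1 = m -> n2 = (m + 3)%N -> a ^+ (p ^ n1) * a ^+ (p ^ n2) = 1.
  move=> m n1 n2 -> ->.
  by rewrite -[RHS](expr1n _ (p ^ m)) -N exprMn frfr addnC.
have GTU : forall i j : 'I_3, a ^+ (p ^ (2 * i)) * a ^+ (p ^ (2 * j).+1) * G i j = G i j.
  apply: ord3P; apply: ord3P;
    rewrite ?G00 ?G11 ?G22 ?G10 ?G21 ?G02 ?mulr0 //.
  - by rewrite (N' 0 _ _ erefl erefl) mul1r.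
  - by rewrite (N' 2 _ _ erefl erefl) mul1r.
  - by rewrite [X in X * G 2 0]mulrC (N' 1 _ _ erefl erefl) mul1r.
have E : (Tm p s)^T *m (A^T *m map_mx (fun x => x ^+ p) A) *m map_mx (fun x => x ^+ p) (Tm p s) = G.
  rewrite -conjG //; apply/matrixP => i j; rewrite (unit_entry i j AT).
  exact: GTU.
have TTu : (Tm p s)^T \in unitmx by rewrite unitmx_tr.
have U : A^T *m map_mx (fun x => x ^+ p) A = 1%:M.
  have : (Tm p s)^T *m ((A^T *m map_mx (fun x => x ^+ p) A) *m map_mx (fun x => x ^+ p) (Tm p s))
     = (Tm p s)^T *m (1%:M *m map_mx (fun x => x ^+ p) (Tm p s)) by rewrite mul1mx mulmxA E.
  by move/(can_inj (mulKmx TTu))/(can_inj (mulmxK Tpu)).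
exists A; split => //.
by have [/[!unitmx_tr]] := mulmx1_unit U.
Qed.

Lemma rat6_data (k : fieldType) (p : nat) (t : 'cV[k]_3) :
  onFermat p t -> ~ ratPt p 2 t -> ratPt p 6 t ->
  exists s : 'cV[k]_3, exists c : k, [/\ onFermat p s, ~ ratPt p 2 s,
    forall i, s i 0 ^+ (p ^ 6) = s i 0, c != 0 & t = c *: s].
Proof.
move=> [tnz hf] nr [s [snz hs [c tc]]].
have c0 : c != 0 by apply: contraNneq tnz => c0; rewrite tc c0 scale0r.
exists s, c; split => //.
- split => //; move: hf; rewrite tc.
  have -> : \sum_(i < 3) (c *: s) i 0 ^+ p.+1 = c ^+ p.+1 * \sum_(i < 3) s i 0 ^+ p.+1.
    by rewrite mulr_sumr; apply: eq_bigr => i _; rewrite mxE exprMn.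
  by move/eqP; rewrite mulf_eq0 expf_eq0 (negbTE c0) andbF /= => /eqP.
- move=> [r [rnz hr [c' sc]]]; apply: nr; exists r; split => //.
  by exists (c * c'); rewrite tc sc scalerA.
Qed.

Unset Implicit Arguments.
Theorem lemma5p10 (k : closedFieldType) (p : nat) (t : 'cV[k]_3) :
  prime p -> p \in [pchar k] ->
  onFermat p t -> ~ ratPt p 2 t ->
  (~ ratPt p 6 t ->
     alpha_bij p t (fun a => a ^+ (p ^ 2) = a /\ a ^+ p.+1 = 1)) /\
  (ratPt p 6 t ->
     alpha_bij p t (fun a => a ^+ (p ^ 6) = a /\ a ^+ (p ^ 3).+1 = 1)).
Proof.
move=> pp hp ft nr.
have inj : forall A B a, inEnd p t A -> inU3 p A -> inEnd p t B -> inU3 p B ->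
    A *m t = a *: t -> B *m t = a *: t -> A = B.
  move=> A B a [hA _] _ [hB _] _ eA eB; exact: (alpha_inj hp ft nr hA hB eA eB).
split.
- move=> nr6; split => //.
  + move=> A a [hA _] [_ _ U] e.
    have a2 := case1_image hp ft nr nr6 hA U e.
    have N := alpha_norm hp ft nr hA U e.
    split => //; rewrite exprS -[RHS]N; congr (_ * _).
    by rewrite -(frfr p 2 1) a2 expn1.
  + move=> a [a2 ap].
    have Ma : map_mx (fun x => x ^+ p) (a%:M : 'M[k]_3) = (a ^+ p)%:M.
      apply/matrixP => i j; rewrite !mxE; case: (i == j) => /=; rewrite ?mulr1n ?mulr0n //.
      by rewrite expr0n eqn0Ngt (prime_gt0 pp).
    have U : (a%:M : 'M[k]_3)^T *m map_mx (fun x => x ^+ p) (a%:M) = 1%:M.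
      by rewrite tr_scalar_mx Ma -scalar_mxM -exprS ap.
    exists a%:M; split.
    * split; last by exists a; rewrite mul_scalar_mx.
      move=> i j; rewrite /inFq mxE; case: (i == j); rewrite ?mulr1n ?mulr0n //.
      by rewrite expr0n eqn0Ngt expn_gt0 (prime_gt0 pp).
    * split => //.
      - move=> i j; rewrite /inFq mxE; case: (i == j); rewrite ?mulr1n ?mulr0n //.
        by rewrite expr0n eqn0Ngt expn_gt0 (prime_gt0 pp).
      - by have [/[!unitmx_tr]] := mulmx1_unit U.
    * by rewrite mul_scalar_mx.
- move=> r6; split => //.
  + move=> A a [hA _] [_ _ U] e.
    have N := alpha_norm hp ft nr hA U e.
    have [_ a6] := alpha_p6 N.
    by split => //; rewrite exprS.
  + move=> a [a6 N]; rewrite exprS in N.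
    have [s [c [fs nrs hs6 c0 tc]]] := rat6_data ft nr r6.
    have [A [hA Au U As]] := case2_surj hp fs nrs hs6 a6 N.
    exists A; split => //.
    * split => //; exists a; by rewrite tc -scalemxAr As !scalerA mulrC.
    * by rewrite tc -scalemxAr As !scalerA mulrC.
Qed.
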